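(* Let $G=(V,E)$ be a multigraph with $|V|=s\ge 2$ vertices, and let $v\in V$. Suppose that $\deg(v)\ge 1$ and $\deg(u)\ge 3$ for all $u\in V\setminus\{v\}$. Then $G$ contains a path $(p_1,p_2,\dots,p_k)$ and a cycle $(c_1,c_2,\dots,c_\ell)$ such that $p_1=v$, $p_k=c_1$, $k\ge 1$, $\ell\ge 1$, and $k+\ell\le 4\log(s)$.
   Context: A multigraph is a graph that may contain parallel edges and (possibly parallel) self-loops. The degree of a vertex is the number of incident edges, where a self-loop contributes two to the degree. A path $(p_1,\dots,p_k)$ is a sequence of $k$ distinct vertices with consecutive ones adjacent (a path with $k=1$ is a single vertex). A cycle $(c_1,\dots,c_\ell)$ on $\ell$ vertices: for $\ell=1$ it is a self-loop at $c_1$, for $\ell=2$ it is a pair of parallel edges between $c_1$ and $c_2$, and for $\ell\ge3$ it is an ordinary cycle through distinct vertices $c_1,\dots,c_\ell$. Logarithms are base 2. *)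

(* Defs.v *)
From mathcomp Require Import all_boot.
From Stdlib Require Import Rdefinitions Rfunctions Rpower.

Set Implicit Arguments.
Unset Strict Implicit.
Unset Printing Implicit Defensive.

(* A multigraph on vertex type T: a finite type E of edges, each edge e
   having (unordered) endpoints [ends e = (a, b)]; a self-loop is an edge
   with [ends e = (u, u)].  Parallel edges are distinct elements of E
   with the same endpoints. *)

Section MultiGraph.
Variables (T E : finType) (ends : E -> T * T).

(* degree: every edge end at u counts once, so a self-loop counts twice *)
Definition deg (u : T) : nat :=
  #|[set e | (ends e).1 == u]| + #|[set e | (ends e).2 == u]|.

Definition joins (e : E) (x y : T) : bool :=
  (ends e == (x, y)) || (ends e == (y, x)).

Definition adj (x y : T) : bool := [exists e, joins e x y].

Definition is_path (p : seq T) : bool :=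
  [&& p != [::], uniq p & sorted adj p].

Definition is_cycle (c : seq T) : bool :=
  match c with
  | [::] => false
  | [:: x] => [exists e, ends e == (x, x)]
  | [:: x; y] => (x != y) &&
      [exists e1, exists e2, [&& e1 != e2, joins e1 x y & joins e2 x y]]
  | _ => uniq c && cycle adj c
  end.

End MultiGraph.

Definition log2 (x : R) : R := (ln x / ln 2)%R.

(* Main.v *)
Require Import Defs.
From mathcomp Require Import all_boot.
From Stdlib Require Import Rdefinitions Raxioms.
From mathcomp Require Import zify ssrnat.
From Stdlib Require Import Lia Classical.

Section G.
Variables (T E : finType) (ends : E -> T * T).
Local Notation adj := (adj ends).

Lemma adjC x y : adj x y = adj y x.
Proof. by apply/existsP/existsP => -[e He]; exists e; rewrite /joins orbC. Qed.

Lemma is_cycle3 c : 2 < size c -> is_cycle ends c = uniq c && cycle adj c.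
Proof. by case: c => [|a [|b [|d r]]]. Qed.

Lemma first_in (b a : seq T) : has (mem b) a ->
  exists pre w post, [/\ a = pre ++ w :: post, w \in b & ~~ has (mem b) pre].
Proof.
elim: a => [//|y a IH] /=; case Hy: (y \in b) => /= H.
  by exists [::], y, a.
have [pre [w [post [-> Hw Hp]]]] := IH H.
by exists (y :: pre), w, post; rewrite /= Hy.
Qed.

Lemma diverge x a b : uniq (x :: a) -> path adj x a -> uniq (x :: b) ->
  path adj x b -> has (mem b) a -> head x a != head x b ->
  exists c, [/\ is_cycle ends c, head x c = x & (size c).+1 <= size a + size b + 1].
Proof.
move=> Ua Pa Ub Pb Hh Hd.
have [pre [w [post [Ea Hw Hp]]]] := first_in _ _ Hh.
case/splitPr: Hw Ub Pb Hd Hp => b1 b2 Ub Pb Hd Hp.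
subst a.
exists (x :: pre ++ w :: rev b1).
have Hsz : 2 < size (x :: pre ++ w :: rev b1).
  move: Hd; clear; case: pre => [|y pre]; case: b1 => [|z b1] //=;
    rewrite ?size_cat ?size_rev //= ?eqxx //; lia.
split => //; last by rewrite /= !size_cat /= size_rev; lia.
rewrite is_cycle3 //; apply/andP; split.
- move: Ua Ub; rewrite !cons_uniq => /andP [Hx Ua] /andP [Hxb Ub].
  have Hxpre : x \notin pre by move: Hx; rewrite mem_cat negb_or => /andP [].
  have Hxw : x != w by move: Hx; rewrite mem_cat in_cons !negb_or => /and3P [].
  have Hxb1 : x \notin b1 by move: Hxb; rewrite mem_cat negb_or => /andP [].
  move: Ua; rewrite cat_uniq => /and3P [Upre Hnh _].
  have Hwpre : w \notin pre by apply/negP => Hw; move/hasPn: Hnh => /(_ w (mem_head _ _)); rewrite Hw.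
  move: Ub; rewrite cat_uniq => /and3P [Ub1 Hnh1 _].
  have Hwb1 : w \notin b1 by apply/negP => Hw; move/hasPn: Hnh1 => /(_ w (mem_head _ _)); rewrite Hw.
  have Hdis : forall y, y \in pre -> y \notin b1.
    move=> y Hy; apply/negP => Hy1; move/hasPn: Hp => /(_ y Hy) /negP; apply.
    by change (y \in b1 ++ w :: b2); rewrite mem_cat Hy1.
  apply/andP; split.
    by rewrite mem_cat in_cons mem_rev !negb_or Hxpre Hxw Hxb1.
  rewrite cat_uniq Upre cons_uniq rev_uniq mem_rev Hwb1 Ub1 andbT /=.
  rewrite andbT negb_or Hwpre /=; apply/hasPn => y; rewrite mem_rev => Hy.
  by apply/negP => /Hdis; rewrite Hy.
- rewrite /= rcons_cat rcons_cons cat_path /=.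
  move: Pa; rewrite cat_path /= => /and3P [-> -> _] /=.
  move: Pb; rewrite cat_path /= => /and3P [Pb1 Hw _].
  have : path adj x (rcons b1 w) by rewrite rcons_path Pb1.
  rewrite -(eq_path (e := fun z => adj^~ z)); last by move=> ??; rewrite adjC.
  by rewrite -rev_path last_rcons belast_rcons rev_cons.
Qed.

Lemma two_paths (a : seq T) : forall x b, uniq (x :: a) -> path adj x a ->
  uniq (x :: b) -> path adj x b -> last x a = last x b -> a != b ->
  exists i c, [/\ i <= size a, is_cycle ends c, nth x (x :: a) i = head x c
                 & i.+1 + size c <= size a + size b + 1].
Proof.
elim: a => [|y a IH] x b Ua Pa Ub Pb Hl Hne.
  case: b Ub Hl Hne {Pb} => [//|z b] Ub Hl _.
  move: Ub; rewrite cons_uniq => /andP [Hx _]; move: Hx.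
  by rewrite /= in Hl; rewrite Hl mem_last.
case: b Ub Pb Hl Hne => [|z b] Ub Pb Hl Hne.
  move: Ua; rewrite cons_uniq => /andP [Hx _]; move: Hx.
  by rewrite /= in Hl; rewrite -Hl mem_last.
have [Eyz|Nyz] := eqVneq y z.
  subst z.
  move: Ua Ub Pa Pb; rewrite cons_uniq => /andP [_ Ua]; rewrite cons_uniq => /andP [_ Ub].
  rewrite /= => /andP [_ Pa] /andP [_ Pb].
  have Hne' : a != b by apply: contra Hne => /eqP ->.
  have [i [c [Hi Hc Hn Hs]]] := IH y b Ua Pa Ub Pb Hl Hne'.
  exists i.+1, c; split => //=.
  - case: c Hc Hn {Hs} => [//|c0 c'] _ /= <-.
    by apply: set_nth_default; rewrite /=; lia.
  - by move: Hs => /=; lia.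
have Hh : has (mem (z :: b)) (y :: a).
  apply/hasP; exists (last y a); first exact: mem_last.
  by rewrite /= in Hl; rewrite Hl; apply: mem_last.
have [c [Hc Hhc Hs]] := diverge _ _ _ Ua Pa Ub Pb Hh Nyz.
by exists 0, c; split.
Qed.

Definition cheap (v : T) (K : nat) := exists p c : seq T,
  [/\ is_path ends p, is_cycle ends c, head v p = v, last v p = head v c
    & size p + size c <= K].

Lemma cheap_mono v K K' : K <= K' -> cheap v K -> cheap v K'.
Proof.
move=> HK [p [c [H1 H2 H3 H4 H5]]]; exists p, c; split => //.
exact: leq_trans HK.
Qed.

Lemma cheap_of_prefix v (ap c : seq T) i K : is_path ends ap -> head v ap = v ->
  is_cycle ends c -> i < size ap -> nth v ap i = head v c ->
  i.+1 + size c <= K -> cheap v K.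
Proof.
move=> /and3P [Hne Hu Hs] Hh Hc Hi Hn HK.
exists (take i.+1 ap), c; split => //.
- apply/and3P; split.
  + by case: ap Hne {Hu Hs Hh Hi Hn}.
  + exact: take_uniq.
  + exact: take_sorted.
- by case: ap Hne {Hu Hs Hi Hn} Hh.
- rewrite -Hn -nth_last size_takel // nth_take //.
- by rewrite size_takel.
Qed.

Lemma two_paths_cheap v ap bp K : is_path ends ap -> head v ap = v ->
  is_path ends bp -> head v bp = v -> last v ap = last v bp -> ap != bp ->
  size ap + size bp <= K.+1 -> cheap v K.
Proof.
case: ap => [//|x a]; case: bp => [//|y b] Hpa /= Ea Hpb /= Eb.
subst x y => Hl Hne HK.
move: (Hpa) (Hpb) => /and3P [_ Ua Pa] /and3P [_ Ub Pb].
have Hne' : a != b by apply: contra Hne => /eqP ->.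
have [i [c [Hi Hc Hn Hs]]] := two_paths _ _ _ Ua Pa Ub Pb Hl Hne'.
apply: (@cheap_of_prefix v (v :: a) c i K Hpa) => //.
move: HK Hs => /=; lia.
Qed.

Definition News (v : T) (p : seq T) := [set w | adj (last v p) w & w \notin p].

Lemma growth v p : is_path ends p -> head v p = v -> ~ cheap v (size p).+2 ->
  deg ends (last v p) <= #|News v p| + (1 < size p).
Proof.
move=> Hp Hh Hnc.
set u := last v p.
have Hnl : forall e, ends e != (u, u).
  move=> e; apply/negP => He; apply: Hnc; exists p, [:: u]; split => //.
  - by apply/existsP; exists e.
  - by rewrite addn1.
set A1 := [set e | (ends e).1 == u].
set A2 := [set e | (ends e).2 == u].
have HI : deg ends u = #|A1 :|: A2|.
  rewrite cardsU; have -> : A1 :&: A2 = set0.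
    apply/setP => e; rewrite !inE; apply/negP => /andP [/eqP H1 /eqP H2].
    by move/negP: (Hnl e); apply; apply/eqP; rewrite [ends e]surjective_pairing H1 H2.
  by rewrite cards0 subn0.
pose oth e := if (ends e).1 == u then (ends e).2 else (ends e).1.
have Hj : forall e, e \in A1 :|: A2 -> joins ends e u (oth e).
  move=> e; rewrite !inE /oth /joins; case: eqP => [<- _|_ /= /eqP <-].
    by rewrite -surjective_pairing eqxx.
  by rewrite -surjective_pairing eqxx orbT.
have Hou : forall e, e \in A1 :|: A2 -> oth e != u.
  move=> e He; apply/negP => /eqP Ho; move: (Hj e He); rewrite Ho /joins orbb.
  by move/negP: (Hnl e).
have Hinj : {in A1 :|: A2 &, injective oth}.
  move=> e1 e2 H1 H2 Ho; case: (eqVneq e1 e2) => [//|Hne]; exfalso; apply: Hnc.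
  exists p, [:: u; oth e1]; split => //.
  - rewrite /is_cycle eq_sym Hou //=.
    apply/existsP; exists e1; apply/existsP; exists e2.
    by rewrite Hne Hj // Ho Hj.
  - by rewrite addn2.
rewrite HI -(card_in_imset Hinj).
set x := nth v p (size p).-2.
have Hsub : [set oth e | e in A1 :|: A2] \subset
    News v p :|: (if 1 < size p then [set x] else set0).
  apply/subsetP => w0 /imsetP [e He ->].
  have Haw : adj u (oth e) by apply/existsP; exists e; apply: Hj.
  case Hwp: (oth e \in p); last by rewrite in_setU /News inE Haw Hwp.
  rewrite in_setU; apply/orP; right.
  set w := oth e in Haw Hwp *.
  have [p1 [p2 Ep]] : exists p1 p2, p = p1 ++ w :: p2.
    exists (take (index w p) p), (drop (index w p).+1 p).
    by rewrite -{1}(cat_take_drop (index w p) p) (drop_nth w) ?index_mem // nth_index.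
  have Hwu : w != u by apply: Hou.
  case: p2 Ep => [|y1 [|y2 r]] Ep.
  - by move: Hwu; rewrite /u Ep last_cat /= eqxx.
  - rewrite /x Ep size_cat /= addn2 /= nth_cat.
    have -> : (size p1).+2.-2 < size p1 = false by rewrite ltnn.
    by rewrite subnn /= inE.
  - exfalso; apply: Hnc.
    apply: (@cheap_of_prefix v p [:: w, y1, y2 & r] (size p1)) => //.
    + rewrite is_cycle3 //; apply/andP; split.
        by move: Hp => /and3P [_ + _]; rewrite Ep cat_uniq => /and3P [_ _].
      change (path adj w (rcons [:: y1, y2 & r] w)); rewrite rcons_path; apply/andP; split.
        by move: Hp => /and3P [_ _]; rewrite Ep sorted_cat_cons => /andP [_].
      by move: Haw; rewrite /u Ep last_cat /=.
    + by rewrite Ep size_cat /=; lia.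
    + by rewrite Ep nth_cat ltnn subnn.
    + by rewrite Ep size_cat /=; lia.
apply: leq_trans (subset_leq_card Hsub) _.
apply: leq_trans (leq_card_setU _ _) _.
by case: (1 < size p); rewrite ?cards1 ?cards0.
Qed.

Lemma uniq_ext (L : seq (seq T)) (f : seq T -> seq T) : uniq L ->
  (forall p, uniq (f p)) -> uniq [seq rcons p w | p <- L, w <- f p].
Proof.
elim: L => [//|p L IH] /= /andP [HpL UL] Uf.
rewrite cat_uniq (map_inj_uniq (@rcons_injr _ p)) Uf IH // andbT /=.
apply/hasPn => q /allpairsPdep [p' [w' [Hp' _ ->]]].
apply/mapP => -[w _ /rcons_inj [Ep _]].
by move: HpL; rewrite -Ep Hp'.
Qed.

Lemma sumn_ge g (s : seq (seq T)) (f : seq T -> nat) :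
  (forall x, x \in s -> g <= f x) -> g * size s <= sumn [seq f x | x <- s].
Proof.
elim: s => [|x s IH] H /=; first by rewrite muln0.
rewrite mulnS leq_add //; first by apply: H; rewrite mem_head.
by apply: IH => y Hy; apply: H; rewrite in_cons Hy orbT.
Qed.

Lemma build v J : 0 < J -> 1 <= deg ends v -> (forall u, u != v -> 3 <= deg ends u) ->
  ~ cheap v J.+1 ->
  exists L A : seq (seq T),
   [/\ (forall p, p \in L -> [/\ is_path ends p, head v p = v & size p = J]),
       uniq L, 2 ^ (J - 2) <= size L &
       [/\ (forall p, p \in A -> [/\ is_path ends p, head v p = v & size p <= J]),
       uniq A & 2 ^ (J - 1) <= size A]].
Proof.
move=> + Hdv Hdu; elim: J => [//|J IH] _ Hnc.
case: (posnP J) => [->|HJ].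
  exists [:: [:: v]], [:: [:: v]]; split => //; last split => //.
  - by move=> p; rewrite mem_seq1 => /eqP ->.
  - by move=> p; rewrite mem_seq1 => /eqP ->.
have Hnc' : ~ cheap v J.+1 by move=> H; apply: Hnc; apply: cheap_mono H.
have [L [A [HL UL SL [HA UA SA]]]] := IH HJ Hnc'.
pose L' := [seq rcons p w | p <- L, w <- enum (News v p)].
have HL' : forall p, p \in L' -> [/\ is_path ends p, head v p = v & size p = J.+1].
  move=> q /allpairsPdep [p [w [Hp Hw ->]]].
  have [Pp Hh Sp] := HL p Hp.
  move: Hw; rewrite mem_enum /News inE => /andP [Haw Hwp].
  case: p Pp Hh Sp {Hp} Haw Hwp => [//|x p] /and3P [_ Up Pp] /= Ex Sp Haw Hwp; subst x.
  split => //; last by rewrite size_rcons Sp.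
  apply/and3P; split => //.
    by rewrite -rcons_cons rcons_uniq Hwp.
  by rewrite /= rcons_path; apply/andP; split.
have SL' : 2 ^ (J.+1 - 2) <= size L'.
  rewrite size_allpairs_dep.
  have Hg : forall p, p \in L -> (if J == 1 then 1 else 2) <= size (enum (News v p)).
    move=> p Hp; have [Pp Hh Sp] := HL p Hp.
    have Hnc2 : ~ cheap v (size p).+2 by rewrite Sp.
    have Hgr := growth _ _ Pp Hh Hnc2.
    rewrite -cardE.
    case: eqP => HJ1.
      move: Hgr; rewrite Sp HJ1 addn0 => Hgr.
      have Hlv : last v p = v.
        by rewrite HJ1 in Sp; case: p Pp Hh Sp {Hp Hgr Hnc2} => [//|x [|y p]] _ //= Hx.
      by rewrite Hlv in Hgr; apply: leq_trans Hdv Hgr.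
    have Hlv : last v p != v.
      case: p Pp Hh Sp {Hp Hgr Hnc2} => [//|x [|y p]] /and3P [_ Up _] /= Hx Sp.
        by move: Sp HJ1 HJ => <-.
      subst x; apply/negP => /eqP Hl; move: Up; rewrite cons_uniq => /andP [+ _].
      by rewrite -Hl mem_last.
    have := Hdu _ Hlv; move: Hgr; rewrite Sp; case: J {IH Hnc Hnc' HL SL HA SA L' HL'} HJ HJ1 Sp => [//|[//|J]] _ _ _ /=.
    rewrite addn1; lia.
  apply: leq_trans (sumn_ge _ _ _ Hg).
  case: eqP => HJ1; first by move: SL; rewrite HJ1 /= mul1n.
  case: J {IH Hnc Hnc' HL SA HA L' HL' Hg} HJ HJ1 SL => [//|[//|J]] _ _ /=.
  by rewrite !subSS subn0 expnS leq_mul2l.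
exists L', (A ++ L'); split => //; last split.
- by apply: uniq_ext => // p; apply: enum_uniq.
- by move=> p; rewrite mem_cat => /orP [/HA [? ? ?]|/HL' [? ? ->]]; split => //; lia.
- rewrite cat_uniq UA uniq_ext ?andbT //; last by move=> p; apply: enum_uniq.
  apply/hasPn => p /HL' [_ _ Sp]; apply/negP => /HA [_ _]; rewrite Sp; lia.
- rewrite size_cat; case: J {IH Hnc Hnc' HL HA HL' SL} HJ SA SL' => [//|J] _ SA SL'.
  move: SA SL'; rewrite /= ?subSS ?subn0 ?subn1 /= => SA SL'.
  by rewrite expnS mul2n -addnn leq_add.
Qed.

Lemma not_inj (A : seq (seq T)) (f : seq T -> T) : ~~ uniq (map f A) -> uniq A ->
  exists a b, [/\ a \in A, b \in A, a != b & f a = f b].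
Proof.
move=> Hnu UA; apply: NNPP => Hn; move: Hnu; rewrite map_inj_in_uniq ?UA //.
move=> a b Ha Hb Hf; case: (eqVneq a b) => // Hab; exfalso; apply: Hn.
by exists a, b.
Qed.

Lemma main_nat v : 2 <= #|T| -> 1 <= deg ends v ->
  (forall u, u != v -> 3 <= deg ends u) -> exists K, cheap v K /\ 2 ^ K <= #|T| ^ 4.
Proof.
move=> Hs Hdv Hdu.
case: (eqVneq #|T| 2) => Hs2.
  exists 4; split; last by rewrite Hs2.
  apply: NNPP => Hn.
  have [L [A [HL UL SL _]]] := build v 3 isT Hdv Hdu Hn.
  case: L HL SL {UL} => [//|p L] HL _.
  have [/and3P [_ Up _] _ Sp] := HL p (mem_head _ _).
  have := max_card (mem p); rewrite (card_uniqP Up) Sp Hs2.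
  done.
have Hs3 : 3 <= #|T| by rewrite ltn_neqAle eq_sym Hs2.
set t := trunc_log 2 #|T|.
have Ht1 : 1 <= t by apply: trunc_log_max => //.
exists (2 * t + 3); split.
  apply: NNPP => Hn.
  have Hn' : ~ cheap v t.+3 by move=> H; apply: Hn; apply: cheap_mono H; lia.
  have [L [A [_ _ _ [HA UA SA]]]] := build v t.+2 isT Hdv Hdu Hn'.
  have Hlt : #|T| < 2 ^ (t.+2 - 1) by rewrite subn1 /=; apply: trunc_log_ltn.
  case: (boolP (uniq (map (last v) A))) => Hu.
    have := max_card (mem (map (last v) A)).
    rewrite (card_uniqP Hu) size_map => HAs.
    by have := leq_trans SA HAs; rewrite leqNgt Hlt.
  have [a [b [Ha Hb Hab Hl]]] := not_inj _ _ Hu UA.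
  have [Pa Ea Sa] := HA a Ha.
  have [Pb Eb Sb] := HA b Hb.
  apply: Hn; apply: (two_paths_cheap _ _ _ _ Pa Ea Pb Eb Hl Hab); apply: leq_trans (leq_add Sa Sb) _; clearbody t; lia.
case: (leqP t 1) => Ht.
  have -> : t = 1 by lia.
  apply: leq_trans (_ : 3 ^ 4 <= _) => //.
  by rewrite leq_exp2r.
apply: leq_trans (_ : 2 ^ (4 * t) <= _).
  by rewrite leq_exp2l //; lia.
rewrite mulnC expnM leq_exp2r //.
by apply: trunc_logP => //; apply: leq_trans Hs.
Qed.

End G.

From Stdlib Require Import Reals Lra.

Lemma expn_pow m n : expn m n = Nat.pow m n.
Proof. elim: n => [|n IH]; first by rewrite expn0.
by rewrite expnS IH /=. Qed.

Lemma real_bound (n s : nat) : 2 <= s -> expn 2 n <= expn s 4 ->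
  (INR n <= 4 * log2 (INR s))%R.
Proof.
move=> Hs Hle.
have Hs0 : (0 < INR s)%R by apply: lt_0_INR; apply/ltP; apply: leq_trans Hs.
have H2 : (0 < ln 2)%R by have := ln_lt_2; lra.
have Hp : (2 ^ n <= INR s ^ 4)%R.
  have -> : (2 = INR 2)%R by simpl; lra.
  rewrite -!pow_INR -!expn_pow; apply: le_INR; exact/leP.
have Hl : (ln (2 ^ n) <= ln (INR s ^ 4))%R.
  have Hpos : (0 < 2 ^ n)%R by apply: pow_lt; lra.
  case: (Rle_lt_or_eq_dec _ _ Hp) => [Hlt|->]; last lra.
  by apply: Rlt_le; apply: ln_increasing.
rewrite !ln_pow // in Hl; last lra.
have E4 : INR 4 = 4%R by simpl; lra.
rewrite E4 in Hl.
rewrite /log2.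
have -> : (INR n = INR n * ln 2 * / ln 2)%R by field; lra.
have -> : (4 * (ln (INR s) / ln 2) = 4 * ln (INR s) * / ln 2)%R by field; lra.
apply: Rmult_le_compat_r; last by [].
by apply: Rlt_le; apply: Rinv_0_lt_compat.
Qed.

Theorem claim2p1 (T E : finType) (ends : E -> T * T) (v : T) :
  2 <= #|T| ->
  1 <= deg ends v ->
  (forall u : T, u != v -> 3 <= deg ends u) ->
  exists (p c : seq T),
    [/\ is_path ends p, is_cycle ends c,
        head v p = v, last v p = head v c &
        (INR (size p + size c) <= 4 * log2 (INR #|T|))%R].
Proof.
move=> Hs Hdv Hdu.
have [K [[p [c [H1 H2 H3 H4 H5]]] HK]] := @main_nat T E ends v Hs Hdv Hdu.
exists p, c; split => //.
apply: real_bound => //.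
apply: leq_trans HK.
by rewrite leq_exp2l.
Qed.
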